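(* For every positive integer $n$, $$LD(P_3\square P_n)\geq\begin{cases} n+1 & \text{if } n\equiv 1 \pmod 3,\\ n & \text{otherwise.}\end{cases}$$
   Context: $P_n$ is the path on $n$ vertices and $\square$ is the Cartesian product of graphs. For a graph $G$, $C\subseteq V(G)$ and $v\in V(G)$ let $I(v)=N[v]\cap C$ ($N[v]$ the closed neighborhood). $C$ is a locating-dominating set if $I(v)\neq\emptyset$ for all $v\in V(G)\setminus C$ and $I(u)\neq I(v)$ for all distinct $u,v\in V(G)\setminus C$. $LD(G)$ is the minimum cardinality of a locating-dominating set of $G$. *)

(* Defs.v *)
From mathcomp Require Import all_boot.
Set Implicit Arguments. Unset Strict Implicit. Unset Printing Implicit Defensive.

Section Graphs.
Variable T : finType.
Variable adj : rel T.

Definition closed_nbhd (v : T) : {set T} := [set u | (u == v) || adj v u].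

Definition Iset (C : {set T}) (v : T) : {set T} := closed_nbhd v :&: C.

Definition locating_dominating (C : {set T}) : bool :=
  [forall v, (v \notin C) ==> (Iset C v != set0)] &&
  [forall u, forall v, [&& u \notin C, v \notin C & u != v] ==> (Iset C u != Iset C v)].

(* LD(G): minimum cardinality of a locating-dominating set. The whole vertex
   set is always locating-dominating, so #|T| is a valid default. *)
Definition LD : nat := \big[minn/#|T|]_(C : {set T} | locating_dominating C) #|C|.
End Graphs.

Definition path_adj (n : nat) : rel 'I_n :=
  fun i j => (i.+1 == j :> nat) || (j.+1 == i :> nat).

Definition cart_adj (A B : finType) (a : rel A) (b : rel B) : rel (A * B) :=
  fun x y => ((x.1 == y.1) && b x.2 y.2) || (a x.1 y.1 && (x.2 == y.2)).

Definition grid_adj (m n : nat) : rel ('I_m * 'I_n)%type :=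
  cart_adj (@path_adj m) (@path_adj n).
Arguments grid_adj : clear implicits.

(* Main.v *)
Require Import Defs.
From mathcomp Require Import all_boot zify.
Set Implicit Arguments. Unset Strict Implicit. Unset Printing Implicit Defensive.

Definition colbit (x r : nat) : bool := [&& x < 8, r < 3 & odd (x %/ 2 ^ r)].
Definition pop (x : nat) : nat := colbit x 0 + colbit x 1 + colbit x 2.

Definition near (a b c d : nat) : bool :=
  ((a == c) && (b == d)) || ((c == a) && ((d.+1 == b) || (b.+1 == d)))
  || (((c.+1 == a) || (a.+1 == c)) && (d == b)).

Definition nearp (p q : nat * nat) := near p.1 p.2 q.1 q.2.
Definition inW (a b c d : nat) (p : nat * nat) := colbit (nth 8 [:: a; b; c; d] p.2) p.1.
Definition pos : seq (nat * nat) := [seq (r, k) | r <- iota 0 3, k <- iota 0 4].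
Definition posU : seq (nat * nat) := [seq (r, 1) | r <- iota 0 3].
Definition posV : seq (nat * nat) := [seq (r, k) | r <- iota 0 3, k <- iota 1 2].

Definition Lc (a b c d : nat) : bool :=
  (b == 8) ||
  (all (fun r => inW a b c d (r, 1) || has (fun w => inW a b c d w && nearp w (r, 1)) pos) (iota 0 3) &&
   all (fun u => all (fun v => [|| inW a b c d u, inW a b c d v, u == v, (v.2 == 2) && (c == 8) |
        has (fun w => inW a b c d w && (nearp w u != nearp w v)) pos]) posV) posU).
Definition tab : seq nat := [:: 2; 2; 1; 3; 3; 2; 3; 3; 2; 4; 4; 3; 3; 3; 2; 4; 4; 3; 4; 4; 3; 5; 5; 4; 0; 0; 0; 3; 3; 2; 4; 4; 3; 3; 4; 3; 4; 5; 4; 4; 4; 3; 5; 5; 4; 4; 5; 4; 5; 6; 5; 0; 0; 0; 3; 3; 2; 4; 4; 3; 4; 4; 3; 5; 5; 4; 4; 4; 3; 5; 4; 4; 5; 5; 4; 6; 5; 5; 0; 0; 0; 3; 3; 3; 4; 4; 4; 4; 4; 4; 5; 5; 5; 4; 4; 4; 5; 5; 5; 5; 5; 5; 6; 6; 6; 0; 0; 0; 3; 3; 2; 4; 4; 3; 3; 4; 3; 4; 5; 4; 4; 4; 3; 5; 5; 4; 4; 5; 4; 5; 6; 5; 0; 0; 0; 3; 4; 3; 4; 5; 4; 4; 5; 4; 5; 6; 5; 4; 5; 4; 5; 6; 5; 5; 6; 5; 6; 7; 6; 0; 0; 0; 3; 3; 3; 4; 4; 4; 4; 4; 4; 5; 5;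 5; 4; 4; 4; 5; 5; 5; 5; 5; 5; 6; 6; 6; 0; 0; 0; 3; 4; 4; 4; 5; 5; 4; 5; 5; 5; 6; 6; 4; 5; 5; 5; 6; 6; 5; 6; 6; 6; 7; 7; 0; 0; 0; 0; 0; 0; 0; 0; 0; 0; 0; 0; 0; 0; 0; 0; 0; 0; 0; 0; 0; 0; 0; 0; 0; 0; 0; 0; 0; 0; 2; 3; 2; 3; 3; 3; 3; 4; 3; 4; 4; 4; 3; 4; 3; 4; 4; 4; 4; 5; 4; 5; 5; 5; 0; 0; 0; 3; 3; 3; 4; 4; 4; 4; 4; 4; 5; 5; 5; 4; 4; 4; 5; 5; 5; 5; 5; 5; 6; 6; 6; 0; 0; 0; 3; 3; 3; 4; 4; 4; 4; 4; 4; 5; 5; 5; 4; 4; 4; 5; 5; 5; 5; 5; 5; 6; 6; 6; 0; 0; 0; 4; 4; 4; 5; 5; 5; 5; 5; 5; 6; 6; 6; 5; 5; 5; 6; 6; 6; 6; 6; 6; 7; 7; 7; 0; 0; 0; 3; 4; 3; 4; 4; 4; 4; 4; 4; 4; 5; 5; 4; 5; 4; 5; 5; 5; 5; 5; 5; 5; 6; 6; 0; 0; 0; 3; 4; 4; 4; 5; 5; 4; 5; 5; 5; 6; 6; 4; 5; 5; 5; 6; 6; 5; 6; 6; 6; 7; 7; 0; 0; 0; 4; 3; 4; 4; 4; 5; 5; 4; 5; 5; 5; 6; 5; 4; 5; 5; 5; 6; 6; 5; 6; 6; 6; 7; 0; 0; 0; 4; 4; 5; 5; 5; 6; 5; 5;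 6; 6; 6; 7; 5; 5; 6; 6; 6; 7; 6; 6; 7; 7; 7; 8; 0; 0; 0; 0; 0; 0; 0; 0; 0; 0; 0; 0; 0; 0; 0; 0; 0; 0; 0; 0; 0; 0; 0; 0; 0; 0; 0; 0; 0; 0; 3; 2; 2; 4; 3; 3; 3; 3; 3; 4; 4; 4; 4; 3; 3; 5; 4; 4; 4; 4; 4; 5; 5; 5; 0; 0; 0; 3; 3; 3; 4; 4; 4; 3; 4; 4; 4; 5; 5; 4; 4; 4; 5; 5; 5; 4; 5; 5; 5; 6; 6; 0; 0; 0; 3; 3; 3; 4; 4; 4; 4; 4; 4; 5; 5; 5; 4; 4; 4; 5; 5; 5; 5; 5; 5; 6; 6; 6; 0; 0; 0; 3; 4; 4; 4; 5; 5; 4; 5; 5; 5; 6; 6; 4; 5; 5; 5; 6; 6; 5; 6; 6; 6; 7; 7; 0; 0; 0; 3; 3; 3; 4; 4; 4; 3; 4; 4; 4; 5; 5; 4; 4; 4; 5; 5; 5; 4; 5; 5; 5; 6; 6; 0; 0; 0; 3; 4; 3; 4; 5; 4; 4; 5; 4; 5; 6; 5; 4; 5; 4; 5; 6; 5; 5; 6; 5; 6; 7; 6; 0; 0; 0; 3; 4; 4; 4; 5; 5; 4; 5; 5; 5; 6; 6; 4; 5; 5; 5; 6; 6; 5; 6; 6; 6; 7; 7; 0; 0; 0; 4; 5; 4; 5; 6; 5; 5; 6; 5; 6; 7; 6; 5; 6; 5; 6; 7; 6; 6; 7; 6; 7; 8; 7; 0; 0; 0; 0; 0; 0; 0; 0;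 0; 0; 0; 0; 0; 0; 0; 0; 0; 0; 0; 0; 0; 0; 0; 0; 0; 0; 0; 0; 0; 0; 3; 3; 2; 4; 4; 3; 3; 3; 3; 4; 4; 4; 4; 4; 3; 5; 5; 4; 4; 4; 4; 5; 5; 5; 0; 0; 0; 3; 3; 3; 4; 4; 4; 4; 4; 4; 5; 5; 5; 4; 4; 4; 5; 5; 5; 5; 5; 5; 6; 6; 6; 0; 0; 0; 3; 3; 3; 4; 4; 4; 4; 4; 4; 5; 5; 5; 4; 4; 4; 5; 5; 5; 5; 5; 5; 6; 6; 6; 0; 0; 0; 4; 4; 4; 5; 5; 5; 5; 5; 5; 6; 6; 6; 5; 5; 5; 6; 6; 6; 6; 6; 6; 7; 7; 7; 0; 0; 0; 4; 3; 3; 5; 4; 4; 4; 4; 4; 5; 5; 5; 5; 4; 4; 6; 5; 5; 5; 5; 5; 6; 6; 6; 0; 0; 0; 4; 4; 4; 5; 5; 5; 5; 5; 5; 6; 6; 6; 5; 5; 5; 6; 6; 6; 6; 6; 6; 7; 7; 7; 0; 0; 0; 4; 4; 4; 5; 5; 5; 5; 5; 5; 6; 6; 6; 5; 5; 5; 6; 6; 6; 6; 6; 6; 7; 7; 7; 0; 0; 0; 5; 5; 5; 6; 6; 6; 6; 6; 6; 7; 7; 7; 6; 6; 6; 7; 7; 7; 7; 7; 7; 8; 8; 8; 0; 0; 0; 0; 0; 0; 0; 0; 0; 0; 0; 0; 0; 0; 0; 0; 0; 0; 0; 0; 0; 0; 0; 0; 0; 0; 0; 0; 0; 0; 2; 3;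 2; 3; 4; 3; 3; 4; 3; 4; 5; 4; 3; 3; 3; 4; 4; 4; 4; 4; 4; 5; 5; 5; 0; 0; 0; 3; 4; 3; 4; 5; 4; 4; 4; 4; 5; 5; 5; 4; 4; 4; 5; 5; 5; 4; 5; 5; 5; 6; 6; 0; 0; 0; 3; 3; 3; 4; 4; 4; 4; 4; 4; 5; 5; 5; 4; 4; 4; 5; 5; 5; 5; 5; 5; 6; 6; 6; 0; 0; 0; 4; 3; 4; 5; 4; 5; 5; 4; 5; 6; 5; 6; 4; 4; 5; 5; 5; 6; 5; 5; 6; 6; 6; 7; 0; 0; 0; 3; 3; 3; 4; 4; 4; 4; 4; 4; 5; 5; 5; 4; 4; 4; 5; 5; 5; 5; 5; 5; 6; 6; 6; 0; 0; 0; 3; 4; 4; 4; 5; 5; 4; 5; 5; 5; 6; 6; 4; 5; 5; 5; 6; 6; 5; 6; 6; 6; 7; 7; 0; 0; 0; 4; 4; 4; 5; 5; 5; 5; 5; 5; 6; 6; 6; 5; 5; 5; 6; 6; 6; 6; 6; 6; 7; 7; 7; 0; 0; 0; 4; 4; 5; 5; 5; 6; 5; 5; 6; 6; 6; 7; 5; 5; 6; 6; 6; 7; 6; 6; 7; 7; 7; 8; 0; 0; 0; 0; 0; 0; 0; 0; 0; 0; 0; 0; 0; 0; 0; 0; 0; 0; 0; 0; 0; 0; 0; 0; 0; 0; 0; 0; 0; 0; 2; 2; 3; 3; 3; 4; 3; 3; 4; 4; 4; 5; 3; 3; 4; 4; 4; 5; 4; 4; 5; 5; 5; 6; 0; 0;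 0; 3; 3; 4; 4; 4; 5; 4; 4; 5; 5; 5; 6; 4; 4; 5; 5; 5; 6; 5; 5; 6; 6; 6; 7; 0; 0; 0; 3; 3; 4; 4; 4; 5; 4; 4; 5; 5; 5; 6; 4; 4; 5; 5; 5; 6; 5; 5; 6; 6; 6; 7; 0; 0; 0; 4; 4; 5; 5; 5; 6; 5; 5; 6; 6; 6; 7; 5; 5; 6; 6; 6; 7; 6; 6; 7; 7; 7; 8; 0; 0; 0; 3; 3; 4; 4; 4; 5; 4; 4; 5; 5; 5; 6; 4; 4; 5; 5; 5; 6; 5; 5; 6; 6; 6; 7; 0; 0; 0; 4; 4; 5; 5; 5; 6; 5; 5; 6; 6; 6; 7; 5; 5; 6; 6; 6; 7; 6; 6; 7; 7; 7; 8; 0; 0; 0; 4; 4; 5; 5; 5; 6; 5; 5; 6; 6; 6; 7; 5; 5; 6; 6; 6; 7; 6; 6; 7; 7; 7; 8; 0; 0; 0; 5; 5; 6; 6; 6; 7; 6; 6; 7; 7; 7; 8; 6; 6; 7; 7; 7; 8; 7; 7; 8; 8; 8; 9; 0; 0; 0; 0; 0; 0; 0; 0; 0; 0; 0; 0; 0; 0; 0; 0; 0; 0; 0; 0; 0; 0; 0; 0; 0; 0; 0; 0; 0; 0; 3; 3; 2; 4; 4; 3; 3; 3; 3; 4; 4; 4; 4; 4; 3; 5; 5; 4; 4; 4; 4; 5; 5; 5; 0; 0; 0; 4; 3; 3; 5; 4; 4; 4; 4; 4; 5; 5; 5; 5; 4; 4; 6; 5; 5; 5; 5; 5; 6; 6;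 6; 0; 0; 0; 3; 3; 3; 4; 4; 4; 4; 4; 4; 5; 5; 5; 4; 4; 4; 5; 5; 5; 5; 5; 5; 6; 6; 6; 0; 0; 0; 4; 4; 4; 5; 5; 5; 5; 5; 5; 6; 6; 6; 5; 5; 5; 6; 6; 6; 6; 6; 6; 7; 7; 7; 0; 0; 0; 3; 3; 3; 4; 4; 4; 4; 4; 4; 5; 5; 5; 4; 4; 4; 5; 5; 5; 5; 5; 5; 6; 6; 6; 0; 0; 0; 4; 4; 4; 5; 5; 5; 5; 5; 5; 6; 6; 6; 5; 5; 5; 6; 6; 6; 6; 6; 6; 7; 7; 7; 0; 0; 0; 4; 4; 4; 5; 5; 5; 5; 5; 5; 6; 6; 6; 5; 5; 5; 6; 6; 6; 6; 6; 6; 7; 7; 7; 0; 0; 0; 5; 5; 5; 6; 6; 6; 6; 6; 6; 7; 7; 7; 6; 6; 6; 7; 7; 7; 7; 7; 7; 8; 8; 8; 0; 0; 0; 0; 0; 0; 0; 0; 0; 0; 0; 0; 0; 0; 0; 0; 0; 0; 0; 0; 0; 0; 0; 0; 0; 0; 0; 0; 0; 0; 3; 2; 3; 4; 3; 4; 4; 3; 4; 5; 4; 5; 4; 3; 4; 5; 4; 5; 5; 4; 5; 6; 5; 6; 0; 0; 0; 4; 3; 4; 5; 4; 5; 5; 4; 5; 6; 5; 6; 5; 4; 5; 6; 5; 6; 6; 5; 6; 7; 6; 7; 0; 0; 0; 4; 3; 4; 5; 4; 5; 5; 4; 5; 6; 5; 6; 5; 4; 5; 6; 5; 6; 6; 5;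 6; 7; 6; 7; 0; 0; 0; 5; 4; 5; 6; 5; 6; 6; 5; 6; 7; 6; 7; 6; 5; 6; 7; 6; 7; 7; 6; 7; 8; 7; 8; 0; 0; 0; 4; 3; 4; 5; 4; 5; 5; 4; 5; 6; 5; 6; 5; 4; 5; 6; 5; 6; 6; 5; 6; 7; 6; 7; 0; 0; 0; 5; 4; 5; 6; 5; 6; 6; 5; 6; 7; 6; 7; 6; 5; 6; 7; 6; 7; 7; 6; 7; 8; 7; 8; 0; 0; 0; 5; 4; 5; 6; 5; 6; 6; 5; 6; 7; 6; 7; 6; 5; 6; 7; 6; 7; 7; 6; 7; 8; 7; 8; 0; 0; 0; 6; 5; 6; 7; 6; 7; 7; 6; 7; 8; 7; 8; 7; 6; 7; 8; 7; 8; 8; 7; 8; 9; 8; 9; 0; 0; 0; 0; 0; 0; 0; 0; 0; 0; 0; 0; 0; 0; 0; 0; 0; 0; 0; 0; 0; 0; 0; 0; 0; 0; 0; 0; 0; 0; 0; 0; 1; 0; 0; 2; 0; 0; 2; 0; 0; 3; 0; 0; 2; 0; 0; 3; 0; 0; 3; 0; 0; 4; 0; 0; 0; 0; 0; 2; 0; 0; 3; 0; 0; 3; 0; 0; 4; 0; 0; 3; 0; 0; 4; 0; 0; 4; 0; 0; 5; 0; 0; 0; 0; 0; 2; 0; 0; 3; 0; 0; 3; 0; 0; 4; 0; 0; 3; 0; 0; 4; 0; 0; 4; 0; 0; 5; 0; 0; 0; 0; 0; 3; 0; 0; 4; 0; 0; 4; 0; 0; 5; 0; 0; 4; 0; 0;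 5; 0; 0; 5; 0; 0; 6; 0; 0; 0; 0; 0; 2; 0; 0; 3; 0; 0; 3; 0; 0; 4; 0; 0; 3; 0; 0; 4; 0; 0; 4; 0; 0; 5; 0; 0; 0; 0; 0; 3; 0; 0; 4; 0; 0; 4; 0; 0; 5; 0; 0; 4; 0; 0; 5; 0; 0; 5; 0; 0; 6; 0; 0; 0; 0; 0; 3; 0; 0; 4; 0; 0; 4; 0; 0; 5; 0; 0; 4; 0; 0; 5; 0; 0; 5; 0; 0; 6; 0; 0; 0; 0; 0; 4; 0; 0; 5; 0; 0; 5; 0; 0; 6; 0; 0; 5; 0; 0; 6; 0; 0; 6; 0; 0; 7; 0; 0; 0; 0; 2; 0; 0; 3; 0; 0; 3; 0; 0; 4; 0; 0; 3; 0; 0; 4; 0; 0; 4; 0; 0; 5; 0; 3; 0; 0].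
Definition hget (a b c r : nat) : nat :=
  if [&& a < 9, b < 9, c < 9 & r < 3] then nth 0 tab (((a * 9 + b) * 9 + c) * 3 + r) else 0.

Definition trans_ok : bool :=
  all (fun a => all (fun b => all (fun c => all (fun r =>
    (hget a b c r == 0) || all (fun x => ~~ Lc a b c x ||
       ((hget b c x (r.+1 %% 3) != 0) && (hget b c x (r.+1 %% 3) + 1 <= hget a b c r + pop x))) (iota 0 8))
  (iota 0 3)) (iota 0 9)) (iota 0 9)) (iota 0 9).

Definition term_ok : bool :=
  all (fun a => all (fun b => all (fun c => all (fun r =>
    [|| hget a b c r == 0, ~~ (Lc a b c 8 && Lc b c 8 8) | 3 + (r == 1) <= hget a b c r])
  (iota 0 3)) (iota 0 9)) (iota 0 9)) (iota 0 9).

Lemma trans_okT : trans_ok. Proof. vm_compute. reflexivity. Qed.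
Lemma term_okT : term_ok. Proof. vm_compute. reflexivity. Qed.
Lemma init_ok : hget 8 8 8 0 = 3. Proof. vm_compute. reflexivity. Qed.

Lemma hget_nz a b c r : hget a b c r != 0 -> [&& a < 9, b < 9, c < 9 & r < 3].
Proof. by rewrite /hget; case: ifP => // _; rewrite eqxx. Qed.

Lemma allI (P : pred nat) k a : all P (iota 0 k) -> a < k -> P a.
Proof. by move=> /allP H Ha; apply: H; rewrite mem_iota. Qed.

Lemma trans_lemma a b c r x : hget a b c r != 0 -> Lc a b c x -> x < 8 ->
  (hget b c x (r.+1 %% 3) != 0) && (hget b c x (r.+1 %% 3) + 1 <= hget a b c r + pop x).
Proof.
move=> H HL Hx; have /and4P [Ha Hb Hc Hr] := hget_nz H.
have := trans_okT; rewrite /trans_ok.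
move=> /(@allI _ _ a) /(_ Ha) ; cbv beta.
move=> /(@allI _ _ b) /(_ Hb) ; cbv beta.
move=> /(@allI _ _ c) /(_ Hc) ; cbv beta.
move=> /(@allI _ _ r) /(_ Hr) ; cbv beta.
rewrite (negbTE H) => /(@allI _ _ x) /(_ Hx) ; cbv beta.
by rewrite HL.
Qed.

Lemma term_lemma a b c r : hget a b c r != 0 -> Lc a b c 8 -> Lc b c 8 8 ->
  3 + (r == 1) <= hget a b c r.
Proof.
move=> H HL1 HL2; have /and4P [Ha Hb Hc Hr] := hget_nz H.
have := term_okT; rewrite /term_ok.
move=> /(@allI _ _ a) /(_ Ha) ; cbv beta.
move=> /(@allI _ _ b) /(_ Hb) ; cbv beta.
move=> /(@allI _ _ c) /(_ Hc) ; cbv beta.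
move=> /(@allI _ _ r) /(_ Hr) ; cbv beta.
by rewrite (negbTE H) HL1 HL2.
Qed.

Section DP.
Variables (n : nat) (E : nat -> nat).
Hypothesis HE8 : forall i, (i < 3) || (n + 3 <= i) -> E i = 8.
Hypothesis HElt : forall i, 3 <= i < n + 3 -> E i < 8.
Hypothesis HL : forall i, Lc (E i) (E i.+1) (E i.+2) (E i.+3).

Lemma gen k : forall m, m + k = n -> forall r, hget (E m) (E m.+1) (E m.+2) r != 0 ->
  3 + ((r + k) %% 3 == 1) + k <= hget (E m) (E m.+1) (E m.+2) r + \sum_(m <= i < n) pop (E (i + 3)).
Proof.
elim: k => [|k IH] m Hm r Hh.
  rewrite addn0 in Hm; subst m.
  have /and4P [_ _ _ Hr] := hget_nz Hh.
  rewrite big_geq // !addn0 modn_small //.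

  have e3 : E n.+3 = 8 by apply: HE8; apply/orP; right; lia.
  have e4 : E n.+4 = 8 by apply: HE8; apply/orP; right; lia.
  apply: term_lemma => //.
    by have := HL n; rewrite e3.
  by have := HL n.+1; rewrite e3 e4.
have Hmn : m < n by lia.
rewrite big_ltn //.
have Hx : E m.+3 < 8 by apply: HElt; lia.
have /andP [Hh' Hle] := trans_lemma Hh (HL m) Hx.
have := IH m.+1 ltac:(lia) _ Hh'.
have -> : ((r.+1 %% 3 + k) %% 3 == 1) = ((r + k.+1) %% 3 == 1) by rewrite modnDml addSnnS.
rewrite -(addn3 m).
move: ((r + k.+1) %% 3 == 1) => q.
rewrite -(addn3 m) in Hle.
lia.
Qed.

Lemma dp_bound : (if n %% 3 == 1 then n.+1 else n) <= \sum_(0 <= i < n) pop (E (i + 3)).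
Proof.
have H0 : hget (E 0) (E 1) (E 2) 0 = 3 by rewrite !HE8 // init_ok.
have := gen (m := 0) (k := n) (erefl _) (r := 0); rewrite H0 => /(_ isT).
rewrite add0n; case: (n %% 3 == 1) => /=; lia.
Qed.
End DP.

Lemma nbhdE n (u w : 'I_3 * 'I_n) :
  (w \in closed_nbhd (grid_adj 3 n) u) = near w.1 w.2 u.1 u.2.
Proof.
case: w u => [w1 w2] [u1 u2]; rewrite inE /grid_adj /cart_adj /path_adj /near /=.
by rewrite xpair_eqE -!val_eqE orbA.
Qed.

Lemma near_shift a b c d t : near a (b + t) c (d + t) = near a b c d.
Proof. by rewrite /near -!addSn !eqn_add2r. Qed.

Lemma near_col a b c d : near a b c d -> (b <= d.+1) && (d <= b.+1).
Proof.
rewrite /near => /orP [/orP [/andP [_ /eqP ->]| /andP [_ /orP [/eqP <-|/eqP <-]]] | /andP [_ /eqP ->]]; lia.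
Qed.

Section Bridge.
Variable n : nat.
Local Notation T := ('I_3 * 'I_n)%type.
Variable C : {set T}.
Hypothesis HC : locating_dominating (grid_adj 3 n) C.

Definition inC (r j : nat) : bool := [exists v in C, (v.1 == r :> nat) && (v.2 == j :> nat)].
Definition code (j : nat) : nat := inC 0 j + 2 * inC 1 j + 4 * inC 2 j.
Definition E (i : nat) : nat := if (3 <= i) && (i < n + 3) then code (i - 3) else 8.

Lemma inC_ord (v : T) : inC v.1 v.2 = (v \in C).
Proof.
apply/existsP/idP => [[w /andP [Hw /andP [/eqP e1 /eqP e2]]]|Hv].
  have -> : v = w by case: v w e1 e2 Hw => [a b] [c d] /= /val_inj -> /val_inj ->.
  done.
by exists v; rewrite Hv !eqxx.
Qed.

Lemma inC_bound r j : inC r j -> (r < 3) && (j < n).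
Proof.
by move=> /existsP [[a b] /andP [_ /andP [/eqP <- /eqP <-]]]; rewrite /= !ltn_ord.
Qed.

Lemma colbit_code j r : colbit (code j) r = inC r j.
Proof.
case: r => [|[|[|r]]].
- by rewrite /colbit /code; case: (inC 0 j); case: (inC 1 j); case: (inC 2 j).
- by rewrite /colbit /code; case: (inC 0 j); case: (inC 1 j); case: (inC 2 j).
- by rewrite /colbit /code; case: (inC 0 j); case: (inC 1 j); case: (inC 2 j).
- rewrite /colbit andbF; case H: (inC _ j) => //.
  by have := inC_bound H.
Qed.

Lemma code_lt j : code j < 8.
Proof. by rewrite /code; case: (inC 0 j); case: (inC 1 j); case: (inC 2 j). Qed.

Lemma colbitE m r : colbit (E m) r = (3 <= m) && inC r (m - 3).
Proof.
rewrite /E; case: ifP => [/andP [-> _]|]; first by rewrite colbit_code.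
case: (leqP 3 m) => //= H3 Hn.
case H: (inC r (m - 3)) => //.
move: (inC_bound H) => /andP [_ Hl].
move: Hn; rewrite ltnNge in H3 *; lia.
Qed.

Lemma E_out m : E m != 8 -> (3 <= m) && (m < n + 3).
Proof. by rewrite /E; case: ifP. Qed.

Lemma HE8 i : (i < 3) || (n + 3 <= i) -> E i = 8.
Proof. rewrite /E; case: ifP => // /andP [H1 H2]; lia. Qed.

Lemma HElt i : 3 <= i < n + 3 -> E i < 8.
Proof. by rewrite /E => ->; apply: code_lt. Qed.

Lemma sum_pop : \sum_(0 <= i < n) pop (E (i + 3)) = #|C|.
Proof.
have -> : #|C| = \sum_(r : 'I_3) \sum_(j : 'I_n) (((r, j) \in C) : nat).
  rewrite pair_bigA /= -sum1_card big_mkcond /=.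
  by apply: eq_bigr => [[a b]] _ /=; case: ifP.
rewrite exchange_big /= big_mkord; apply: eq_bigr => j _.
rewrite big_ord_recl big_ord_recl big_ord_recl big_ord0 addn0.
rewrite /pop !colbitE leq_addl addnK /= addnA.
by rewrite -!(inC_ord (_, j)).
Qed.

Lemma inW_E i p : inW (E i) (E i.+1) (E i.+2) (E i.+3) p =
  (p.2 < 4) && colbit (E (i + p.2)) p.1.
Proof.
case: p => r [|[|[|[|k]]]] /=; rewrite ?addn0 ?addn1 ?addn2 ?addn3 //.
by rewrite /inW /= nth_nil.
Qed.

Definition lp (j : nat) (w : T) : nat * nat := (w.1 : nat, w.2 + 1 - j).

Lemma lp_pos j (w : T) : j <= w.2 + 1 -> w.2 <= j + 2 -> lp j w \in pos.
Proof.
move=> H1 H2; apply/allpairsP; exists (w.1 : nat, w.2 + 1 - j); split; rewrite ?mem_iota //=.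
lia.
Qed.

Lemma lp_inW j (w : T) : j <= w.2 + 1 -> w.2 <= j + 2 ->
  inW (E j.+2) (E j.+3) (E j.+4) (E j.+2.+3) (lp j w) = (w \in C).
Proof.
move=> H1 H2; rewrite inW_E /= colbitE.
have -> : j.+2 + (w.2 + 1 - j) = w.2 + 3 by lia.
rewrite addnK leq_addl /= -inC_ord.
have -> : w.2 + 1 - j < 4 by lia.
done.
Qed.

Lemma lp_near j (w x : T) : j <= w.2 + 1 -> j <= x.2 + 1 ->
  nearp (lp j w) (lp j x) = near w.1 w.2 x.1 x.2.
Proof.
move=> H1 H2; rewrite /nearp /= -(near_shift _ _ _ _ j) !subnK //.
exact: near_shift.
Qed.

Lemma dist_gen j (U V : T) : U \notin C -> V \notin C -> U != V ->
  j <= U.2 <= j + 1 -> j <= V.2 <= j + 1 ->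
  has (fun w => inW (E j.+2) (E j.+3) (E j.+4) (E j.+2.+3) w &&
     (nearp w (lp j U) != nearp w (lp j V))) pos.
Proof.
move=> HU HV HUV /andP [U1 U2] /andP [V1 V2].
move: HC => /andP [_ /forallP /(_ U) /forallP /(_ V) /implyP HI].
have {}HI := HI ltac:(by rewrite HU HV HUV).
have [w Hw] : exists w : T, (w \in Iset (grid_adj 3 n) C U) != (w \in Iset (grid_adj 3 n) C V).
  apply/existsP; apply: contraR HI => /existsPn Hn; apply/eqP/setP => w.
  by move: (Hn w); rewrite negbK => /eqP.
move: Hw; rewrite /Iset !in_setI !nbhdE.
case Hwc: (w \in C); last by rewrite !andbF.
rewrite !andbT => Hne.
have Hb : j <= w.2 + 1 /\ w.2 <= j + 2.
  move: Hne; case Hn1: (near _ _ U.1 U.2); case Hn2: (near _ _ V.1 V.2) => // _.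
    by move: (near_col Hn1) => /andP [? ?]; split; lia.
  by move: (near_col Hn2) => /andP [? ?]; split; lia.
case: Hb => Hb1 Hb2.
apply/hasP; exists (lp j w); first exact: lp_pos.
rewrite lp_inW // Hwc /= !lp_near //; lia.
Qed.

Lemma HLb i : Lc (E i) (E i.+1) (E i.+2) (E i.+3).
Proof.
rewrite /Lc; case Eb: (E i.+1 == 8) => //; apply/orP; right.
have /andP [Hi1 Hi2] := E_out (negbT Eb).
have [j ei Hj] : exists2 j, i = j.+2 & j < n.
  by exists (i - 2); lia.
subst i.
apply/andP; split.
  apply/allP => r; rewrite mem_iota add0n => Hr.
  pose u : T := (Ordinal Hr, Ordinal Hj).
  have Hlu : lp j u = (r, 1) by rewrite /lp /= addKn.
  rewrite -Hlu lp_inW; [|by rewrite /=; lia|by rewrite /=; lia].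
  case Hu: (u \in C) => //; rewrite orFb.
  move: HC => /andP [/forallP /(_ u) /implyP HD _].
  have := HD ltac:(by rewrite Hu) => /set0Pn [w].
  rewrite /Iset in_setI nbhdE => /andP [Hn Hw].
  have := near_col Hn => /andP [Hb1 Hb2].
  have Hu2 : (u.2 : nat) = j by [].
  rewrite Hu2 in Hb1 Hb2.
  apply/hasP; exists (lp j w); first by apply: lp_pos; lia.
  rewrite lp_inW ?Hw; try lia.
  rewrite (lp_near (x := u)) ?Hn //; lia.
apply/allP => uu /mapP [r]; rewrite mem_iota add0n => Hr ->.
apply/allP => vv /allpairsP [[r' k'] [Hr' Hk' ->]].
rewrite !mem_iota in Hr' Hk'; simpl in Hr', Hk'.
have {}Hr' : r' < 3 by lia.
pose U : T := (Ordinal Hr, Ordinal Hj).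
have HlU : lp j U = (r, 1) by rewrite /lp /= addKn.
case H1: (inW _ _ _ _ (r, 1)) => //.
case H2: (inW _ _ _ _ (r', k')) => //.
case H3: ((r, 1) == (r', k')) => //.
case H4: ((k' == 2) && (E j.+4 == 8)) => //.
rewrite !orFb.
have HUC : U \notin C.
  rewrite -(@lp_inW j U); first by rewrite HlU H1.
    by rewrite /= leq_addr.
  by rewrite /= leq_addr.
have [jv Hjv Hk] : exists2 jv, jv < n & k' = jv + 1 - j /\ j <= jv <= j + 1.
  case: k' Hk' H2 H3 H4 => [|[|[|k]]] //= Hk' H2 H3 H4.
    by exists j => //; split; clear -Hj; lia.
  exists j.+1; last by split; clear -Hj; lia.
  move: H4 => /negbT /E_out; clear -Hj; lia.
case: Hk => Hk Hjj.
pose V : T := (Ordinal Hr', Ordinal Hjv).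
have HlV : lp j V = (r', k') by rewrite /lp /= Hk.
have HVC : V \notin C.
  rewrite -(@lp_inW j V); first by rewrite HlV H2.
    by rewrite /=; clear -Hjj; lia.
  by rewrite /=; clear -Hjj; lia.
have HUV : U != V.
  apply: contraFneq H3 => e; by rewrite -HlU -HlV e.
rewrite -HlU -HlV; apply: dist_gen => //=.
  by rewrite leqnn leq_addr.
Qed.

End Bridge.

Theorem lemma4p13 (n : nat) : 0 < n ->
  LD (grid_adj 3 n) >= (if n %% 3 == 1 then n.+1 else n).
Proof.
move=> Hn; rewrite /LD.
apply: (big_ind (fun x => (if n %% 3 == 1 then n.+1 else n) <= x)).
- rewrite card_prod !card_ord; case: ifP => _; lia.
- by move=> x y Hx Hy; rewrite leq_min Hx Hy.
- move=> C HC; rewrite -(sum_pop HC).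
  apply: dp_bound.
  + exact: HE8.
  + exact: HElt.
  + exact: HLb.
Qed.
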